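(* Let $(S,d)$ be a metric space, let $P$ be a non-empty subset of $S$ with the induced metric, and let $f,g\in\mathrm{BL}(P)$. Then: (i) $\mathcal{E}^{S,0}_P(f)\le\|f\|_\infty\mathbf{1}$; (ii) $\mathcal{E}^{S,0}_P(c\mathbf{1})=c\mathbf{1}$ for every $c\in\mathbb{R}$; (iii) if $f\le g$ and $|f|_L\ge|g|_L$, then $\mathcal{E}^{S,0}_P(f)\le\mathcal{E}^{S,0}_P(g)$; (iv) if $|f\vee g|_L\ge|f|_L$ and $|f\vee g|_L\ge|g|_L$, then $\mathcal{E}^{S,0}_P(f\vee g)\le\mathcal{E}^{S,0}_P(f)\vee\mathcal{E}^{S,0}_P(g)$.
   Context: $\mathrm{BL}(P)$ is the space of bounded real-valued Lipschitz functions on $P$, $|f|_L=\sup_{x\neq y}|f(x)-f(y)|/d(x,y)$ (with $|f|_L=0$ if $P$ is a singleton), $f\vee g$ is the pointwise maximum, and $\mathbf{1}$ is the constant function $1$. For $f\in\mathrm{BL}(P)$, $\mathcal{E}^{S,0}_P f(x)=\sup_{p\in P}[f(p)-|f|_L d(p,x)]$ for $x\in S$. *)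

(* Defs.v *)
From HB Require Import structures.
From mathcomp Require Import all_boot all_order all_algebra.
From mathcomp Require Import boolp classical_sets reals.
Set Implicit Arguments. Unset Strict Implicit. Unset Printing Implicit Defensive.
Import Order.TTheory GRing.Theory Num.Theory.
Local Open Scope classical_set_scope.
Local Open Scope ring_scope.

Definition is_metric (R : realType) (S : Type) (d : S -> S -> R) : Prop :=
  [/\ (forall x y, 0 <= d x y),
      (forall x y, d x y = 0 <-> x = y),
      (forall x y, d x y = d y x) &
      (forall x y z, d x z <= d x y + d y z)].

(* f : S -> R is regarded as a function on P (values off P are irrelevant).
   BL(P): bounded and Lipschitz on P. *)
Definition BL (R : realType) (S : Type) (d : S -> S -> R) (P : set S)
  (f : S -> R) : Prop :=
  (exists M : R, forall p, P p -> `|f p| <= M) /\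
  (exists L : R, forall p q, P p -> P q -> `|f p - f q| <= L * d p q).

Definition lipnorm (R : realType) (S : Type) (d : S -> S -> R) (P : set S)
  (f : S -> R) : R :=
  if `[< exists x y, [/\ P x, P y & x <> y] >] then
    sup [set r | exists x y, [/\ P x, P y, x <> y & r = `|f x - f y| / d x y]]
  else 0.

Definition supnorm (R : realType) (S : Type) (P : set S) (f : S -> R) : R :=
  sup [set r | exists p, P p /\ r = `|f p|].

Definition ext0 (R : realType) (S : Type) (d : S -> S -> R) (P : set S)
  (f : S -> R) (x : S) : R :=
  sup [set r | exists p, P p /\ r = f p - lipnorm d P f * d p x].

(* Main.v *)
Require Import Defs.
From HB Require Import structures.
From mathcomp Require Import all_boot all_order all_algebra.
From mathcomp Require Import boolp classical_sets reals.
Import Order.TTheory GRing.Theory Num.Theory.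
Local Open Scope classical_set_scope.
Local Open Scope ring_scope.
Set Implicit Arguments.

Lemma lip_ge0 (R : realType) (S : Type) (d : S -> S -> R) (P : set S) f :
  is_metric d -> 0 <= lipnorm d P f.
Proof.
case=> d0 _ _ _; rewrite /lipnorm; case: asboolP => // -[x [y [Px Py xy]]].
set E := [set r | _].
have Er : E (`|f x - f y| / d x y) by exists x, y.
have [hs|nhs] := pselect (has_sup E).
  apply: (le_trans _ (sup_upper_bound hs Er)); exact: divr_ge0.
by rewrite sup_out.
Qed.

Lemma lip_cst (R : realType) (S : Type) (d : S -> S -> R) (P : set S) c :
  lipnorm d P (fun _ => c) = 0.
Proof.
rewrite /lipnorm; case: asboolP => // -[x [y [Px Py xy]]].
rewrite -(sup1 (0:R)); congr sup; apply/seteqP; split => r /=.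
  by case=> [a [b [_ _ _ ->]]]; rewrite subrr normr0 mul0r.
move=> ->; exists x, y; split => //; by rewrite subrr normr0 mul0r.
Qed.

Lemma elt_le (R : realType) (S : Type) (d : S -> S -> R) (P : set S) f x p :
  is_metric d -> P p -> f p - lipnorm d P f * d p x <= f p.
Proof.
move=> hd Pp; have := hd; case=> d0 _ _ _.
rewrite lerBlDr lerDl; apply: mulr_ge0 => //; exact: lip_ge0.
Qed.

Lemma bnd_ext (R : realType) (S : Type) (d : S -> S -> R) (P : set S) f x :
  is_metric d -> BL d P f ->
  has_ubound [set r | exists p, P p /\ r = f p - lipnorm d P f * d p x].
Proof.
move=> hd [[M hM] _]; exists M => r [p [Pp ->]].
apply: (le_trans (elt_le P f x p hd Pp)).
exact: le_trans (ler_norm _) (hM p Pp).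
Qed.

Lemma ne_ext (R : realType) (S : Type) (d : S -> S -> R) (P : set S) f x :
  P !=set0 -> 
  [set r | exists p, P p /\ r = f p - lipnorm d P f * d p x] !=set0.
Proof. by case=> p Pp; exists (f p - lipnorm d P f * d p x), p. Qed.

Unset Implicit Arguments.
Theorem proposition4p3 (R : realType) (S : Type) (d : S -> S -> R) (P : set S)
  (hd : is_metric d) (hP : P !=set0) :
  (forall f : S -> R, BL d P f ->
     forall x : S, ext0 d P f x <= supnorm P f) /\
  (forall c : R, forall x : S, ext0 d P (fun _ => c) x = c) /\
  (forall f g : S -> R, BL d P f -> BL d P g ->
     (forall p, P p -> f p <= g p) -> lipnorm d P g <= lipnorm d P f ->
     forall x : S, ext0 d P f x <= ext0 d P g x) /\
  (forall f g : S -> R, BL d P f -> BL d P g ->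
     lipnorm d P f <= lipnorm d P (fun p => Num.max (f p) (g p)) ->
     lipnorm d P g <= lipnorm d P (fun p => Num.max (f p) (g p)) ->
     forall x : S, ext0 d P (fun p => Num.max (f p) (g p)) x
                   <= Num.max (ext0 d P f x) (ext0 d P g x)).
Proof.
have d0 : forall x y, 0 <= d x y by case: hd.
split.
  move=> f hf x; apply: ge_sup; first exact: ne_ext.
  move=> r [p [Pp ->]]; apply: (le_trans (elt_le P f x p hd Pp)).
  apply: (le_trans (ler_norm (f p))).
  have [[M hM] _] := hf.
  apply: ub_le_sup; first by exists M => s [q [Pq ->]]; exact: hM.
  by exists p.
split.
  move=> c x; rewrite /ext0 lip_cst -[RHS](sup1 c); congr sup.
  apply/seteqP; split => r /=.
    by case=> p [_ ->]; rewrite mul0r subr0.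
  by move=> ->; case: hP => p Pp; exists p; rewrite mul0r subr0.
split.
  move=> f g hf hg fg lgf x; apply: ge_sup; first exact: ne_ext.
  move=> r [p [Pp ->]].
  apply: (@le_trans _ _ (g p - lipnorm d P g * d p x)).
    apply: lerB; first exact: fg.
    exact: ler_wpM2r.
  apply: ub_le_sup; first exact: bnd_ext.
  by exists p.
move=> f g hf hg lf lg x; apply: ge_sup; first exact: ne_ext.
move=> r [p [Pp ->]].
set L := lipnorm d P _.
have ef : f p - lipnorm d P f * d p x <= ext0 d P f x.
  apply: ub_le_sup; first exact: bnd_ext. by exists p.
have eg : g p - lipnorm d P g * d p x <= ext0 d P g x.
  apply: ub_le_sup; first exact: bnd_ext. by exists p.
have hf' : f p - L * d p x <= ext0 d P f x.
  apply: le_trans ef; apply: lerB => //; exact: ler_wpM2r.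
have hg' : g p - L * d p x <= ext0 d P g x.
  apply: le_trans eg; apply: lerB => //; exact: ler_wpM2r.
rewrite lerBlDr ge_max; apply/andP; split; rewrite -lerBlDr.
  by apply: (le_trans hf'); rewrite le_max lexx.
by apply: (le_trans hg'); rewrite le_max lexx orbT.
Qed.
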